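(* Let $M \ge 1$ and $K \ge 1$ be integers, and for each document $j \in \{1,\dots,M\}$ and topic $i \in \{1,\dots,K\}$ let $n_{j\cdot}^i \in \{0,1,2,\dots\}$ be fixed, with $N_j = \sum_{i=1}^K n_{j\cdot}^i$. Let $K_{j+} = |\{ i : n_{j\cdot}^i > 0\}|$. For $\alpha > 0$ define \[ p(\mathbf{Z} \mid \alpha) = \prod_{j=1}^M \frac{\Gamma(\alpha K)}{\Gamma\big(\sum_{i=1}^K n_{j\cdot}^i + \alpha K\big)} \prod_{i=1}^K \frac{\Gamma(n_{j\cdot}^i + \alpha)}{\Gamma(\alpha)}. \] Fix $\lambda > 0$ and set $\alpha = \exp(-\lambda \eta)$. Then, as $\eta \to \infty$, \[ -\log p(\mathbf{Z} \mid \alpha) \sim \eta \lambda \sum_{j=1}^M (K_{j+} - 1). \]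
   Context: Here $\mathbf{Z}$ denotes a fixed assignment of word tokens in $M$ documents to $K$ topics, and $n_{j\cdot}^i$ is the number of tokens in document $j$ assigned to topic $i$; $p(\mathbf{Z}\mid\alpha)$ is the Dirichlet-multinomial likelihood of these assignments under a symmetric Dirichlet$(\alpha)$ prior on per-document topic proportions. The notation $f(\eta) \sim g(\eta)$ means $f(\eta)/g(\eta) \to 1$ as $\eta \to \infty$. *)

(* Defs.v *)
From HB Require Import structures.
From mathcomp Require Import all_boot all_order all_algebra.
From mathcomp Require Import all_classical all_reals all_analysis.
Set Implicit Arguments. Unset Strict Implicit. Unset Printing Implicit Defensive.
Import Order.TTheory GRing.Theory Num.Theory.
Import numFieldNormedType.Exports.
Local Open Scope classical_set_scope.
Local Open Scope ring_scope.

(* Euler's Gamma function, Gamma(x) = int_0^oo t^(x-1) e^(-t) dt (for x > 0;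
   only used at positive arguments below). *)
Definition Gamma (R : realType) (x : R) : R :=
  Rintegral lebesgue_measure `]0, +oo[%classic
    (fun t : R => t `^ (x - 1) * expR (- t)).

Definition Kplus (M K : nat) (n : 'I_M -> 'I_K -> nat) (j : 'I_M) : nat :=
  #|[set i : 'I_K | (0 < n j i)%N]|.

Definition pZ (R : realType) (M K : nat) (n : 'I_M -> 'I_K -> nat) (alpha : R) : R :=
  \prod_(j < M)
    (Gamma (alpha * K%:R) / Gamma ((\sum_(i < K) n j i)%:R + alpha * K%:R)
     * \prod_(i < K) (Gamma ((n j i)%:R + alpha) / Gamma alpha)).

(* Main.v *)
Require Import Defs.
From HB Require Import structures.
From mathcomp Require Import all_boot all_order all_algebra.
From mathcomp Require Import all_classical all_reals all_analysis.
From mathcomp Require Import measurable_realfun.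
From mathcomp Require Import ring lra.
Import Order.TTheory GRing.Theory Num.Theory.
Import numFieldNormedType.Exports.
Local Open Scope classical_set_scope.
Local Open Scope ring_scope.

Section G.
Context {R : realType}.
Local Notation mu := (@lebesgue_measure R).

Lemma cont_powR (p t : R) : 0 < t -> {for t, continuous (fun s : R => s `^ p)}.
Proof.
move=> t0; have [d _] := is_derive1_powR p t0.
by apply: differentiable_continuous; apply/derivable1_diffP.
Qed.

Lemma isd_F (x t : R) : 0 < t ->
  is_derive t 1 (fun s : R => x^-1 * s `^ x) (x^-1 * (x * t `^ (x - 1))).
Proof.
move=> t0; have := is_derive1_powR x t0.
move=> h; exact: is_deriveZ.
Qed.

Lemma ftc_pow (x e : R) : 0 < x -> 0 < e -> e < 1 ->
  (\int[mu]_(t in `[e, 1%R]) (t `^ (x - 1))%:E = ((1 - e `^ x) / x)%:E)%E.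
Proof.
move=> x0 e0 e1.
pose F := fun s : R => x^-1 * s `^ x.
rewrite (_ : (((1 - e `^ x) / x)%:E = (F 1)%:E - (F e)%:E)%E); last first.
  rewrite /F powR1 -EFinB; congr EFin.
  by rewrite mulrBl mul1r mulr1 (mulrC (e `^ x)).
apply: (@continuous_FTC2 _ _ F) => //.
- apply: continuous_in_subspaceT => t; rewrite inE/= in_itv/= => /andP[et _].
  by apply: cont_powR; exact: lt_le_trans et.
- split.
  + move=> t; rewrite in_itv/= => /andP[et _].
    by have [] := isd_F x t (lt_trans e0 et).
  + apply: cvg_at_right_filter.
    have [d _] := isd_F x e e0.
    by apply: differentiable_continuous; apply/derivable1_diffP.
  + apply: cvg_at_left_filter.
    have [d _] := isd_F x 1 ltr01.
    by apply: differentiable_continuous; apply/derivable1_diffP.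
- move=> t; rewrite in_itv/= => /andP[et _].
  have t0 := lt_trans e0 et.
  rewrite derive1E; have [_ ->] := isd_F x t t0.
  by rewrite mulrA mulVf ?mul1r // gt_eqF.
Qed.

Lemma int01_pow_le (x : R) : 0 < x ->
  (\int[mu]_(t in `]0%R, 1%R]) (t `^ (x - 1))%:E <= (x^-1)%:E)%E.
Proof.
move=> x0.
pose F k := `[(k.+2%:R)^-1, 1%R]%classic : set R.
have eqU : `]0, 1%R]%classic = \bigcup_k F k.
  apply/seteqP; split => t /=.
    rewrite in_itv/= => /andP[t0 t1].
    exists (Num.truncn t^-1) => //; rewrite /F /= in_itv/= t1 andbT.
    rewrite invf_ple ?posrE ?ltr0n ?invr_gt0//.
    apply: ltW; apply: lt_trans (truncnS_gt _) _.
    by rewrite ltr_nat.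
  move=> [k _]; rewrite /F /= !in_itv/= => /andP[kt ->]; rewrite andbT.
  by apply: lt_le_trans kt; rewrite invr_gt0 ltr0n.
have nd : {homo F : n m / (n <= m)%N >-> (n <= m)%O}.
  move=> n m nm; rewrite subsetEset; apply: subset_itvr.
  rewrite bnd_simp lef_pV2 ?posrE ?ltr0n// ler_nat.
  by rewrite ltnS ltnS.
have cv : (\int[mu]_(t in F k) (t `^ (x - 1))%:E)%E @[k --> \oo] -->
    (\int[mu]_(t in \bigcup_k F k) (t `^ (x - 1))%:E)%E.
  apply: ge0_nondecreasing_set_cvg_integral => //.
  - by move=> k; exact: measurable_itv.
  - by move=> k; apply: measurableT_comp => //; apply: measurable_funTS; exact: measurable_powR.
  - by move=> k t _; rewrite lee_fin powR_ge0.
rewrite eqU -(cvg_lim _ cv)//; apply: lime_le; first exact: cvgP cv.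
apply: nearW => k; rewrite /F ftc_pow //; last first.
  by rewrite invf_lt1 ?ltr0n// ltr1n.
rewrite lee_fin -[X in _ <= X]mul1r ler_wpM2r ?invr_ge0 ?ltW//.
Qed.

Lemma pow_le_exp (n : nat) (y : R) : 0 <= y -> y ^+ n <= n`!%:R * expR y.
Proof.
move=> y0; case: n => [|m].
  by rewrite expr0 fact0 mul1r; apply: le_trans (expR_ge1Dx y); rewrite lerDl.
have h := expR_ge1Dxn m y0.
rewrite -ler_pdivrMl ?ltr0n ?fact_gt0// mulrC.
by apply: le_trans h; rewrite lerDr.
Qed.

Lemma tail_pt (x t : R) (n : nat) : 1 <= t -> x - 1 <= n%:R ->
  t `^ (x - 1) * expR (- t) <=
  2 ^+ n.+1 * n`!%:R * exponential_pdf (2^-1) t.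
Proof.
move=> t1 xn.
have t0 : 0 <= t by apply: le_trans t1.
rewrite exponential_pdfE //=.
have h1 : t `^ (x - 1) <= t ^+ n.
  by rewrite -powR_mulrn //; apply: ler_powR.
apply: (le_trans (y := t ^+ n * expR (- t))).
  by rewrite ler_wpM2r // expR_ge0.
have e1 : t ^+ n <= 2 ^+ n * n`!%:R * expR (2^-1 * t).
  have -> : t ^+ n = 2 ^+ n * (2^-1 * t) ^+ n.
    by rewrite -exprMn mulrA divff ?mul1r // pnatr_eq0.
  rewrite -mulrA ler_wpM2l ?exprn_ge0 //.
  by apply: pow_le_exp; rewrite mulr_ge0 // invr_ge0.
apply: (le_trans (y := 2 ^+ n * n`!%:R * expR (2^-1 * t) * expR (- t))).
  by rewrite ler_wpM2r // expR_ge0.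
rewrite -mulrA -expRD.
have -> : 2^-1 * t + - t = - 2^-1 * t. { field. done. }
rewrite le_eqVlt; apply/orP; left; apply/eqP.
rewrite exprS. field. done.
Qed.

Lemma mg (x : R) : measurable_fun setT (fun t : R => t `^ (x - 1) * expR (- t)).
Proof.
apply: measurable_funM; first exact: measurable_powR.
apply: measurableT_comp; first exact: measurable_expR.
exact: measurable_funN.
Qed.

Lemma gam_p1 (x : R) : 0 < x ->
  (\int[mu]_(t in `]0%R, 1%R]) (t `^ (x - 1) * expR (- t))%:E <= (x^-1)%:E)%E.
Proof.
move=> x0.
apply: (le_trans _ (int01_pow_le _ x0)).
apply: ge0_le_integral => //.
- by move=> t _; rewrite lee_fin mulr_ge0 ?powR_ge0 ?expR_ge0.
- apply: measurableT_comp => //; exact: measurable_funTS (mg x).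
- by apply: measurableT_comp => //; apply: measurable_funTS; exact: measurable_powR.
move=> t /=; rewrite in_itv/= => /andP[t0 _].
by rewrite lee_fin ler_piMr ?powR_ge0// expR_le1 oppr_le0 ltW.
Qed.

Lemma gam_p2 (x : R) (n : nat) : x - 1 <= n%:R ->
  (\int[mu]_(t in `]1%R, +oo[) (t `^ (x - 1) * expR (- t))%:E
     <= (2 ^+ n.+1 * n`!%:R)%:E)%E.
Proof.
move=> xn.
pose c : R := 2 ^+ n.+1 * n`!%:R.
have c0 : 0 <= c by rewrite mulr_ge0 ?exprn_ge0.
have A : (\int[mu]_(t in `]1%R, +oo[) (t `^ (x - 1) * expR (- t))%:E <=
    \int[mu]_(t in `]1%R, +oo[) (c * exponential_pdf 2^-1 t)%:E)%E.
  apply: ge0_le_integral => //.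
  - by move=> t _; rewrite lee_fin mulr_ge0 ?powR_ge0 ?expR_ge0.
  - apply: measurableT_comp => //; exact: measurable_funTS (mg x).
  - apply: measurableT_comp => //; apply: measurable_funTS.
    by apply: measurable_funM => //; exact: measurable_exponential_pdf.
  move=> t /=; rewrite in_itv/= andbT => t1.
  by rewrite lee_fin; apply: tail_pt => //; rewrite ltW.
apply: (le_trans A).
have B : (\int[mu]_(t in `]1%R, +oo[) (c * exponential_pdf 2^-1 t)%:E <=
    \int[mu]_t (c * exponential_pdf 2^-1 t)%:E)%E.
  apply: ge0_subset_integral => //.
  - apply: measurableT_comp => //.
    by apply: measurable_funM => //; exact: measurable_exponential_pdf.
  - by move=> t _; rewrite lee_fin mulr_ge0 ?exponential_pdf_ge0.
apply: (le_trans B).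
under eq_integral do rewrite EFinM.
rewrite ge0_integralZl_EFin //.
- by rewrite integral_exponential_pdf ?mule1.
- by move=> t _; rewrite lee_fin exponential_pdf_ge0.
- apply: measurableT_comp => //; exact: measurable_exponential_pdf.
Qed.

Lemma gam_ub (x : R) (n : nat) : 0 < x -> x - 1 <= n%:R ->
  (\int[mu]_(t in `]0%R, +oo[) (t `^ (x - 1) * expR (- t))%:E
     <= (x^-1 + 2 ^+ n.+1 * n`!%:R)%:E)%E.
Proof.
move=> x0 xn.
rewrite (@itv_bndbnd_setU _ _ _ (BRight 1%R)) //.
rewrite ge0_integral_setU //; last first.
- apply/disj_setPS => t [] /=; rewrite !in_itv/= => /andP[_ t1] /andP[+ _].
  by rewrite ltNge t1.
- by move=> t _; rewrite lee_fin mulr_ge0 ?powR_ge0 ?expR_ge0.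
- apply: measurableT_comp => //; exact: measurable_funTS (mg x).
rewrite EFinD; apply: leeD; [exact: gam_p1 | exact: gam_p2].
by rewrite bnd_simp.
Qed.

Lemma gam_lb (x : R) : 0 < x ->
  (((expR (-1) * (1 - expR (-1))) / x)%:E <=
   \int[mu]_(t in `]0%R, +oo[) (t `^ (x - 1) * expR (- t))%:E)%E.
Proof.
move=> x0.
pose e := expR (- x^-1).
have e0 : 0 < e by exact: expR_gt0.
have e1 : e < 1 by rewrite /e expR_lt1 oppr_lt0 invr_gt0.
have ex : e `^ x = expR (-1).
  by rewrite /e -expRM mulNr mulVf ?gt_eqF.
have A : (\int[mu]_(t in `[e, 1%R]) (t `^ (x - 1) * expR (- t))%:E <=
    \int[mu]_(t in `]0%R, +oo[) (t `^ (x - 1) * expR (- t))%:E)%E.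
  apply: ge0_subset_integral => //.
  - apply: measurableT_comp => //; exact: measurable_funTS (mg x).
  - by move=> t _; rewrite lee_fin mulr_ge0 ?powR_ge0 ?expR_ge0.
  - move=> t /=; rewrite !in_itv/= => /andP[et _].
    by rewrite andbT (lt_le_trans e0 et).
have B : (\int[mu]_(t in `[e, 1%R]) (expR (-1) * t `^ (x - 1))%:E <=
    \int[mu]_(t in `[e, 1%R]) (t `^ (x - 1) * expR (- t))%:E)%E.
  apply: ge0_le_integral => //.
  - by move=> t _; rewrite lee_fin mulr_ge0 ?powR_ge0 ?expR_ge0.
  - apply: measurableT_comp => //; apply: measurable_funTS.
    by apply: measurable_funM => //; exact: measurable_powR.
  - apply: measurableT_comp => //; exact: measurable_funTS (mg x).
  move=> t /=; rewrite in_itv/= => /andP[_ t1].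
  rewrite lee_fin mulrC ler_wpM2l ?powR_ge0// ler_expR lerN2//.
have C : (\int[mu]_(t in `[e, 1%R]) (expR (-1) * t `^ (x - 1))%:E =
    (expR (-1) * ((1 - e `^ x) / x))%:E)%E.
  under eq_integral do rewrite EFinM.
  rewrite ge0_integralZl_EFin //.
  - by rewrite ftc_pow.
  - by move=> t _; rewrite lee_fin powR_ge0.
  - apply: measurableT_comp => //; apply: measurable_funTS; exact: measurable_powR.
apply: (le_trans _ A); apply: (le_trans _ B); rewrite C ex.
by rewrite mulrA.
Qed.

Lemma fine_bnd (I : \bar R) (l u : R) : (l%:E <= I)%E -> (I <= u%:E)%E ->
  l <= fine I <= u.
Proof. by case: I => [r| |] //=; rewrite !lee_fin => -> ->. Qed.

Lemma Gamma_bounds (x : R) (n : nat) : 0 < x -> x - 1 <= n%:R ->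
  expR (-1) * (1 - expR (-1)) / x <= Gamma x <= x^-1 + 2 ^+ n.+1 * n`!%:R.
Proof.
move=> x0 xn; exact: (@fine_bnd _ _ _ (gam_lb _ x0) (gam_ub _ _ x0 xn)).
Qed.

Definition cG : R := expR (-1) * (1 - expR (-1)).
Definition UB (n : nat) : R := 2 ^+ n.+1 * n`!%:R.
Definition DD (n : nat) : R := `|ln cG| + ln (n.+1%:R) + ln (1 + UB n).

Lemma cG_gt0 : 0 < cG.
Proof. by rewrite /cG mulr_gt0 ?expR_gt0 // subr_gt0 expR_lt1 ltrN10. Qed.

Lemma UB_ge0 n : 0 <= UB n.
Proof. by rewrite /UB mulr_ge0 ?exprn_ge0. Qed.

Lemma DD_ge0 n : 0 <= DD n.
Proof.
rewrite /DD addr_ge0 // ?addr_ge0 // ln_ge0 //.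
  by rewrite ler1n.
by rewrite lerDl UB_ge0.
Qed.

Lemma lnG_lb (x : R) (n : nat) : 0 < x -> x - 1 <= n%:R ->
  0 < Gamma x /\ ln cG - ln x <= ln (Gamma x).
Proof.
move=> x0 xn; have /andP[lb _] := Gamma_bounds x n x0 xn.
have q0 : 0 < cG / x by rewrite divr_gt0 // cG_gt0.
have G0 : 0 < Gamma x := lt_le_trans q0 lb.
split => //.
rewrite -lnV ?posrE // -lnM ?posrE ?invr_gt0 ?cG_gt0 //.
by rewrite ler_ln ?posrE.
Qed.

Lemma lnG_small (x : R) (n : nat) : 0 < x -> x <= 1 ->
  `|ln (Gamma x) + ln x| <= DD n.
Proof.
move=> x0 x1.
have xn : x - 1 <= n%:R.
  by apply: (@le_trans _ _ 0); [rewrite subr_le0 | exact: ler0n].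
have [G0 lb] := lnG_lb x n x0 xn.
have /andP[_ ub] := Gamma_bounds x n x0 xn.
have ub' : Gamma x <= (1 + UB n) / x.
  apply: le_trans ub _; rewrite mulrDl mul1r lerD2l.
  rewrite -/(UB n) -{1}(mulr1 (UB n)) ler_wpM2l ?UB_ge0 //.
  by rewrite invf_ge1.
have lub : ln (Gamma x) <= ln (1 + UB n) - ln x.
  rewrite -lnV ?posrE // -lnM ?posrE ?invr_gt0 //; last first.
    by rewrite (lt_le_trans ltr01) // lerDl UB_ge0.
  by rewrite ler_ln ?posrE // divr_gt0 // (lt_le_trans ltr01) // lerDl UB_ge0.
have h1 := ler_norm (- ln cG); rewrite normrN in h1.
have h2 : 0 <= ln (n.+1%:R : R) by rewrite ln_ge0 // ler1n.
have h3 : 0 <= ln (1 + UB n) by rewrite ln_ge0 // lerDl UB_ge0.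
have h4 := normr_ge0 (ln cG).
rewrite /DD ler_norml; apply/andP; split; lra.
Qed.

Lemma lnG_big (x : R) (n : nat) : 1 <= x -> x - 1 <= n%:R ->
  `|ln (Gamma x)| <= DD n.
Proof.
move=> x1 xn.
have x0 : 0 < x := lt_le_trans ltr01 x1.
have [G0 lb] := lnG_lb x n x0 xn.
have /andP[_ ub] := Gamma_bounds x n x0 xn.
have ub' : Gamma x <= 1 + UB n.
  by apply: le_trans ub _; rewrite lerD2r invf_le1.
have lub : ln (Gamma x) <= ln (1 + UB n).
  by rewrite ler_ln ?posrE // (lt_le_trans ltr01) // lerDl UB_ge0.
have lx : ln x <= ln (n.+1%:R : R).
  rewrite ler_ln ?posrE ?ltr0n //.
  by rewrite -natr1 -lerBlDr.
have h1 := ler_norm (- ln cG); rewrite normrN in h1.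
have h3 : 0 <= ln (1 + UB n) by rewrite ln_ge0 // lerDl UB_ge0.
have h4 := normr_ge0 (ln cG).
have h2 : 0 <= ln (n.+1%:R : R) by rewrite ln_ge0 // ler1n.
rewrite /DD ler_norml; apply/andP; split; lra.
Qed.

Lemma ln_prod (I : finType) (F : I -> R) : (forall i, 0 < F i) ->
  ln (\prod_i F i) = \sum_i ln (F i).
Proof.
move=> F0.
have -> : \prod_i F i = \prod_i expR (ln (F i)).
  by apply: eq_bigr => i _; rewrite lnK ?posrE.
by rewrite -expR_sum expRK.
Qed.

Lemma ln_div (x y : R) : 0 < x -> 0 < y -> ln (x / y) = ln x - ln y.
Proof.
by move=> x0 y0; rewrite lnM ?posrE ?invr_gt0 // lnV ?posrE.
Qed.

Lemma Gamma_pos (x : R) (n : nat) : 0 < x -> x - 1 <= n%:R -> 0 < Gamma x.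
Proof. by move=> x0 xn; have [] := lnG_lb x n x0 xn. Qed.

Definition Pj (G : R -> R) (K : nat) (v : 'I_K -> nat) (a : R) : R :=
  G (a * K%:R) / G ((\sum_(i < K) v i)%:R + a * K%:R)
  * \prod_(i < K) (G ((v i)%:R + a) / G a).
Arguments Pj G {K}.

Lemma doc_bound (G : R -> R) (D : R) (B : nat) (K : nat) (v : 'I_K -> nat) (a L : R) :
  0 <= D ->
  (forall x, 0 < x -> x - 1 <= B%:R -> 0 < G x) ->
  (forall x, 0 < x -> x <= 1 -> `|ln (G x) + ln x| <= D) ->
  (forall x, 1 <= x -> x - 1 <= B%:R -> `|ln (G x)| <= D) ->
  (1 <= K)%N -> (0 < \sum_(i < K) v i)%N -> (\sum_(i < K) v i <= B)%N ->
  0 < a -> a * K%:R <= 1 -> ln a = - L ->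
  0 < Pj G v a /\
  `| - ln (Pj G v a) - (#|[set i : 'I_K | (0 < v i)%N]|%:R - 1) * L|
     <= D + ln K%:R + D + K%:R * (D + D).
Proof.
move=> D0 Gpos Gsmall Gbig K1 N0 NB a0 aK1 lna.
have K0 : (0 : R) < K%:R by rewrite ltr0n.
have aK0 : 0 < a * K%:R by rewrite mulr_gt0.
have a1 : a <= 1.
  by apply: (le_trans _ aK1); rewrite -{1}(mulr1 a) ler_pM2l // ler1n.
set N := \sum_(i < K) v i.
have vN i : (v i <= N)%N by rewrite /N (bigD1 i) //= leq_addr.
have xnB (y : R) : y <= 1 -> y - 1 <= B%:R.
  by move=> y1; apply: (@le_trans _ _ 0); [rewrite subr_le0 | exact: ler0n].
have xnB2 (m : nat) (y : R) : (m <= B)%N -> y <= 1 -> m%:R + y - 1 <= B%:R.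
  move=> mB y1; rewrite -addrA -[B%:R]addr0; apply: lerD; first by rewrite ler_nat.
  by rewrite subr_le0.
have GaK0 : 0 < G (a * K%:R) := Gpos _ aK0 (xnB _ aK1).
have GN0 : 0 < G (N%:R + a * K%:R).
  apply: Gpos; last exact: xnB2.
  by rewrite addr_gt0 // ltr0n.
have Ga0 : 0 < G a := Gpos _ a0 (xnB _ a1).
have vB i : (v i <= B)%N := leq_trans (vN i) NB.
have Gv0 i : 0 < G ((v i)%:R + a).
  apply: Gpos; last exact: xnB2.
  by rewrite ltr_wpDl // ler0n.
have q1 : 0 < G (a * K%:R) / G (N%:R + a * K%:R) := divr_gt0 GaK0 GN0.
have q3 i : 0 < G ((v i)%:R + a) / G a := divr_gt0 (Gv0 i) Ga0.
have q2 : 0 < \prod_(i < K) (G ((v i)%:R + a) / G a).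
  by apply: prodr_gt0 => i _; exact: q3.
have P0 : 0 < Pj G v a := mulr_gt0 q1 q2.
split; first exact: P0.
have lnP : ln (Pj G v a) = ln (G (a * K%:R)) - ln (G (N%:R + a * K%:R))
    + \sum_(i < K) (ln (G ((v i)%:R + a)) - ln (G a)).
  rewrite /Pj -/N (lnM q1 q2) (ln_div _ _ GaK0 GN0) (ln_prod _ _ q3).
  by congr (_ + _); apply: eq_bigr => i _; rewrite (ln_div _ _ (Gv0 i) Ga0).
have lnaK : ln (a * K%:R) = - L + ln K%:R by rewrite lnM ?posrE // lna.
have KpL : (#|[set i : 'I_K | (0 < v i)%N]|%:R : R) * L =
    \sum_(i < K) (if (0 < v i)%N then L else 0).
  rewrite -big_mkcond /= sumr_const mulr_natl.
  by congr (_ *+ _); apply: eq_card => i; apply/idP/idP; rewrite ?in_setE.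
set T3 := fun i : 'I_K => - (ln (G ((v i)%:R + a)) - ln (G a))
   - (if (0 < v i)%N then L else 0).
have E : - ln (Pj G v a) - (#|[set i : 'I_K | (0 < v i)%N]|%:R - 1) * L =
   (- (ln (G (a * K%:R)) + ln (a * K%:R)) + ln K%:R)
   + ln (G (N%:R + a * K%:R)) + \sum_(i < K) T3 i.
  rewrite lnP mulrBl mul1r KpL /T3 /= !sumrB sumrN sumrB lnaK.
  move: (ln (G (a * K%:R))) (ln (G (N%:R + a * K%:R)))
    (\sum_(i < K) ln (G ((v i)%:R + a))) (\sum_(i < K) ln (G a))
    (\sum_(i < K) (if (0 < v i)%N then L else 0)) (ln (K%:R : R)) => x1 x2 x3 x4 x5 x6.
  ring.
rewrite E.
have lK : 0 <= ln (K%:R : R) by rewrite ln_ge0 // ler1n.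
have b1 : `| - (ln (G (a * K%:R)) + ln (a * K%:R)) + ln K%:R| <= D + ln K%:R.
  apply: le_trans (ler_normD _ _) _; rewrite normrN (ger0_norm lK) lerD2r.
  exact: Gsmall.
have b2 : `| ln (G (N%:R + a * K%:R)) | <= D.
  apply: Gbig; last exact: xnB2.
  by rewrite -[X in X <= _]addr0; apply: lerD; [rewrite ler1n | exact: ltW].
have b3 : \sum_(i < K) `|T3 i| <= K%:R * (D + D).
  have -> : K%:R * (D + D) = \sum_(i < K) (D + D).
    by rewrite sumr_const card_ord mulr_natl.
  apply: ler_sum => i _; rewrite /T3.
  case: (posnP (v i)) => [v0 | vpos].
    rewrite v0 /= mulr0n add0r subrr oppr0 addr0 normr0.
    exact: addr_ge0.
  have -> : L = - ln a by rewrite lna opprK.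
  have -> : - (ln (G ((v i)%:R + a)) - ln (G a)) - - ln a =
      - ln (G ((v i)%:R + a)) + (ln (G a) + ln a).
    move: (ln (G ((v i)%:R + a))) (ln (G a)) (ln a) => y1 y2 y3; ring.
  apply: le_trans (ler_normD _ _) _; apply: lerD.
    rewrite normrN; apply: Gbig; last exact: xnB2.
    by rewrite -[X in X <= _]addr0; apply: lerD; [rewrite ler1n | exact: ltW].
  exact: Gsmall.
apply: le_trans (ler_normD _ _) _; apply: lerD.
  apply: le_trans (ler_normD _ _) _; exact: lerD b1 b2.
exact: le_trans (ler_norm_sum _ _ _) b3.
Qed.

End G.

Lemma key_bound (R : realType) (M K : nat) (n : 'I_M -> 'I_K -> nat) (lam eta : R) :
  (1 <= K)%N -> (forall j, (0 < \sum_(i < K) n j i)%N) -> 0 < lam ->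
  ln (K%:R : R) / lam <= eta ->
  `| - ln (pZ n (expR (- lam * eta)))
     - (\sum_(j < M) ((Kplus n j)%:R - 1 : R)) * (lam * eta)|
  <= M%:R * (DD (R:=R) (\sum_(j < M) \sum_(i < K) n j i)
      + ln K%:R + DD (R:=R) (\sum_(j < M) \sum_(i < K) n j i)
      + K%:R * (DD (R:=R) (\sum_(j < M) \sum_(i < K) n j i)
             + DD (R:=R) (\sum_(j < M) \sum_(i < K) n j i))).
Proof.
move=> hK hN hlam heta.
set B := \sum_(j < M) \sum_(i < K) n j i.
set D := DD (R:=R) B.
set E := D + ln K%:R + D + K%:R * (D + D).
pose a := expR (- lam * eta).
have a0 : 0 < a := expR_gt0 _.
have K0 : (0 : R) < K%:R by rewrite ltr0n.
have aK1 : a * K%:R <= 1.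
  rewrite /a -[X in _ * X](lnK (x := K%:R)) ?posrE // -expRD expR_le1.
  rewrite ler_pdivrMr // in heta; lra.
have lna : ln a = - (lam * eta) by rewrite /a expRK mulNr.
have NB j : (\sum_(i < K) n j i <= B)%N by rewrite /B (bigD1 j) //= leq_addr.
have db j := @doc_bound R (@Gamma R) D B K (n j) a (lam * eta) (DD_ge0 B)
  (fun x x0 xB => Gamma_pos x B x0 xB) (fun x x0 x1 => lnG_small x B x0 x1)
  (fun x x1 xB => lnG_big x B x1 xB) hK (hN j) (NB j) a0 aK1 lna.
have -> : pZ n a = \prod_(j < M) Pj (@Gamma R) K (n j) a by [].
rewrite (ln_prod _ _ (fun j => (db j).1)).
rewrite mulr_suml -sumrN -sumrB.
apply: le_trans (ler_norm_sum _ _ _) _.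
have -> : M%:R * E = \sum_(j < M) E by rewrite sumr_const card_ord mulr_natl.
apply: ler_sum => j _.
exact: (db j).2.
Qed.

Theorem lemma1 (R : realType) (M K : nat) (n : 'I_M -> 'I_K -> nat) (lam : R)
  (hM : (1 <= M)%N) (hK : (1 <= K)%N)
  (hN : forall j : 'I_M, (0 < \sum_(i < K) n j i)%N)
  (hS : \sum_(j < M) ((Kplus n j)%:R - 1 : R) != 0)
  (hlam : 0 < lam) :
  (- ln (pZ n (expR (- lam * eta))))
    / (eta * lam * \sum_(j < M) ((Kplus n j)%:R - 1 : R))
    @[eta --> +oo] --> (1 : R).
Proof.
set S := \sum_(j < M) ((Kplus n j)%:R - 1 : R).
have key := @key_bound R M K n lam.
set C := M%:R * _ in key.
have S0 : 0 < `|S| by rewrite normr_gt0.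
apply/cvgrPdist_le => eps eps0.
near=> eta.
have h1 : ln (K%:R : R) / lam <= eta.
  by near: eta; apply: nbhs_pinfty_ge; rewrite num_real.
have h2 : C / (eps * lam * `|S|) <= eta.
  by near: eta; apply: nbhs_pinfty_ge; rewrite num_real.
have h3 : 1 <= eta.
  by near: eta; apply: nbhs_pinfty_ge; rewrite num_real.
have kf := key eta hK hN hlam h1.
move: kf; move: (- ln (pZ n (expR (- lam * eta)))) => f kf.
have eta0 : 0 < eta by apply: lt_le_trans h3.
have den0 : 0 < `|eta * lam * S|.
  by rewrite normr_gt0 !mulf_neq0 // gt_eqF.
have e1 : 1 - f / (eta * lam * S) = (S * (lam * eta) - f) / (eta * lam * S).
  have eq1 : S * (lam * eta) = eta * lam * S by ring.
  by rewrite mulrBl eq1 divff // -normr_gt0.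
rewrite e1 normrM normfV ler_pdivrMr // distrC.
apply: le_trans kf _.
rewrite ler_pdivrMr ?mulr_gt0 // in h2.
apply: le_trans h2 _.
rewrite !normrM (gtr0_norm eta0) (gtr0_norm hlam).
by rewrite le_eqVlt; apply/orP; left; apply/eqP; ring.
Unshelve. all: end_near.
Qed.
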